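(* Let $R$ be a commutative ring which is not arithmetic. Then there exist a maximal ideal $P$ of $R$ and elements $a,b\in P$ such that the module $S=\{x\in E_R(R/P)\mid ax=0\text{ and } bx=0\}$ is pure-injective but not RD-injective.
   Context: $R$ is arithmetic if $R_P$ is a valuation ring for every maximal ideal $P$. $E_R(R/P)$ is the injective hull of $R/P$. A short exact sequence $0\to N\to M\to L\to0$ is pure-exact if it remains exact after tensoring with every $R$-module, and RD-exact if $rM\cap N=rN$ for all $r\in R$. A module $F$ is pure-injective (resp. RD-injective) if $\mathrm{Hom}_R(-,F)$ carries every pure-exact (resp. RD-exact) sequence to an exact sequence. *)

(* Defs.v *)
From HB Require Import structures.
From mathcomp Require Import all_boot all_order all_algebra.
Set Implicit Arguments. Unset Strict Implicit. Unset Printing Implicit Defensive.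
Import Order.TTheory GRing.Theory Num.Theory.
Local Open Scope ring_scope.

Section Ideals.
Variable R : comPzRingType.

Definition is_ideal (I : R -> Prop) : Prop :=
  [/\ I 0, (forall x y, I x -> I y -> I (x + y)) & (forall r x, I x -> I (r * x))].

Definition is_maximal_ideal (P : R -> Prop) : Prop :=
  [/\ is_ideal P, ~ P 1 &
      forall J : R -> Prop, is_ideal J -> (forall x, P x -> J x) ->
        (forall x, J x -> P x) \/ J 1].

(* Equality in R_P :  x/s = y/t  iff  v (x t - y s) = 0 for some v \notin P. *)
Definition loc_eq (P : R -> Prop) (x s y t : R) : Prop :=
  exists v, ~ P v /\ v * (x * t - y * s) = 0.

(* x/s divides y/t in R_P : (x/s)(z/u) = y/t for some z/u in R_P. *)
Definition loc_dvd (P : R -> Prop) (x s y t : R) : Prop :=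
  exists z u, ~ P u /\ loc_eq P (x * z) (s * u) y t.

(* R_P is a valuation ring: divisibility in R_P is total
   (equivalently, its ideals are totally ordered by inclusion). *)
Definition localization_is_valuation (P : R -> Prop) : Prop :=
  forall x s y t, ~ P s -> ~ P t -> loc_dvd P x s y t \/ loc_dvd P y t x s.

Definition arithmetic : Prop :=
  forall P : R -> Prop, is_maximal_ideal P -> localization_is_valuation P.

End Ideals.

Section Modules.
Variable R : comPzRingType.

Definition is_lin (N M : lmodType R) (f : N -> M) : Prop :=
  forall (r : R) (x y : N), f (r *: x + y) = r *: f x + f y.

Definition short_exact (N M L : lmodType R) (f : N -> M) (g : M -> L) : Prop :=
  [/\ is_lin f, is_lin g, injective f,
      (forall z, exists y, g y = z) &
      (forall y, g y = 0 <-> exists x, y = f x)].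

(* --- Tensor products, built as Free(N x F) / (bilinearity relations). *)
(* A formal R-combination of pairs is a list of (coefficient, (n, f)). *)
Definition fcoef (N F : lmodType R) (s : seq (R * (N * F))) (k : N * F) : R :=
  \sum_(p <- s | p.2 == k) p.1.

Inductive tens_rel (N F : lmodType R) : Type :=
  | RelAddL of N & N & F
  | RelAddR of N & F & F
  | RelScL of R & N & F
  | RelScR of R & N & F.

Definition rel_expand (N F : lmodType R) (g : tens_rel N F) : seq (R * (N * F)) :=
  match g with
  | RelAddL n n' f => [:: (1, (n + n', f)); (-1, (n, f)); (-1, (n', f))]
  | RelAddR n f f' => [:: (1, (n, f + f')); (-1, (n, f)); (-1, (n, f'))]
  | RelScL r n f => [:: (1, (r *: n, f)); (- r, (n, f))]
  | RelScR r n f => [:: (1, (n, r *: f)); (- r, (n, f))]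
  end.

Definition fscale (N F : lmodType R) (c : R) (s : seq (R * (N * F))) :=
  [seq (c * p.1, p.2) | p <- s].

Definition tensor_zero (N F : lmodType R) (s : seq (R * (N * F))) : Prop :=
  exists L : seq (R * tens_rel N F),
    forall k, fcoef s k = fcoef (flatten [seq fscale c.1 (rel_expand c.2) | c <- L]) k.

Definition tensor_eq (N F : lmodType R) (s t : seq (R * (N * F))) : Prop :=
  tensor_zero (s ++ fscale (-1) t).

Definition tmap (N M F : lmodType R) (f : N -> M) (s : seq (R * (N * F))) :
  seq (R * (M * F)) := [seq (p.1, (f p.2.1, p.2.2)) | p <- s].

Definition tensor_exact (N M L F : lmodType R) (f : N -> M) (g : M -> L) : Prop :=
  [/\ (forall s : seq (R * (N * F)), tensor_zero (tmap f s) -> tensor_zero s),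
      (forall t : seq (R * (L * F)), exists s, tensor_eq (tmap g s) t),
      (forall s : seq (R * (N * F)), tensor_zero (tmap g (tmap f s))) &
      (forall s : seq (R * (M * F)), tensor_zero (tmap g s) ->
          exists s', tensor_eq s (tmap f s'))].

Definition pure_exact (N M L : lmodType R) (f : N -> M) (g : M -> L) : Prop :=
  short_exact f g /\ forall F : lmodType R, tensor_exact F f g.

(* rM \cap N = rN, N identified with its image f(N) *)
Definition RD_exact (N M L : lmodType R) (f : N -> M) (g : M -> L) : Prop :=
  short_exact f g /\
  forall (r : R) (m : M),
    ((exists y, m = r *: y) /\ (exists x, m = f x)) <-> (exists x, m = f (r *: x)).

Definition hom_exact (N M L F : lmodType R) (f : N -> M) (g : M -> L) : Prop :=
  [/\ (forall phi : L -> F, is_lin phi -> (forall y, phi (g y) = 0) -> forall z, phi z = 0),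
      (forall phi : L -> F, is_lin phi -> forall x, phi (g (f x)) = 0),
      (forall psi : M -> F, is_lin psi -> (forall x, psi (f x) = 0) ->
          exists phi : L -> F, is_lin phi /\ forall y, psi y = phi (g y)) &
      (forall h : N -> F, is_lin h ->
          exists psi : M -> F, is_lin psi /\ forall x, psi (f x) = h x)].

Definition pure_injective (F : lmodType R) : Prop :=
  forall (N M L : lmodType R) (f : N -> M) (g : M -> L),
    pure_exact f g -> hom_exact F f g.

Definition RD_injective (F : lmodType R) : Prop :=
  forall (N M L : lmodType R) (f : N -> M) (g : M -> L),
    RD_exact f g -> hom_exact F f g.

Definition injective_module (E : lmodType R) : Prop :=
  forall (N M L : lmodType R) (f : N -> M) (g : M -> L),
    short_exact f g -> hom_exact E f g.

(* E is an injective hull of R/P: E is injective, and it contains the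
   submodule R e ~ R/P (ann e = P, the image of 1 + P) as an essential
   submodule: every nonzero cyclic submodule R x meets R e nontrivially. *)
Definition injective_hull_of_quotient (P : R -> Prop) (E : lmodType R) (e : E) : Prop :=
  [/\ injective_module E,
      (forall r : R, r *: e = 0 <-> P r) &
      (forall x : E, x != 0 -> exists r s : R, r *: x != 0 /\ r *: x = s *: e)].

End Modules.

Section Ann2.
Variables (R : comPzRingType) (E : lmodType R) (a b : R).

Definition ann2_pred : {pred E} := [pred x | (a *: x == 0) && (b *: x == 0)].

Lemma ann2_closed : subsemimod_closed ann2_pred.
Proof.
split; first split.
- by rewrite inE !scaler0 eqxx.
- move=> x y; rewrite !inE => /andP[/eqP ax /eqP bx] /andP[/eqP ay /eqP by_].
  by rewrite !scalerDr ax bx ay by_ addr0 eqxx.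
- move=> r x; rewrite !inE => /andP[/eqP ax /eqP bx].
  by rewrite !scalerA [a * r]mulrC [b * r]mulrC -!scalerA ax bx !scaler0 eqxx.
Qed.

HB.instance Definition _ := GRing.isSubmodClosed.Build R E ann2_pred ann2_closed.

Record ann2 := Ann2 { ann2_val :> E; ann2_mem : ann2_val \in ann2_pred }.

HB.instance Definition _ := [isSub for ann2_val].
HB.instance Definition _ := [Choice of ann2 by <:].
HB.instance Definition _ := [SubChoice_isSubLmodule of ann2 by <:].

End Ann2.

(* Main.v *)
Require Import Defs.
From HB Require Import structures.
From mathcomp Require Import all_boot all_order all_algebra.
From mathcomp Require Import boolp functions.
From mathcomp Require Import ring.
Set Implicit Arguments. Unset Strict Implicit. Unset Printing Implicit Defensive.
Import GRing.Theory.
Local Open Scope ring_scope.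

Section Lin.
Variable R : comPzRingType.
Variables (N M : lmodType R) (f : N -> M) (hf : is_lin f).
Lemma lin0 : f 0 = 0.
Proof. have := hf 1 0 0; rewrite !scale1r addr0 => H.
have := congr1 (fun z => z - f 0) H; by rewrite /= subrr addrK => ->. Qed.
Lemma linD x y : f (x + y) = f x + f y.
Proof. by rewrite -{1}[x]scale1r hf scale1r. Qed.
Lemma linZ r x : f (r *: x) = r *: f x.
Proof. by rewrite -[r *: x]addr0 hf lin0 addr0. Qed.
Lemma linN x : f (- x) = - f x.
Proof. by rewrite -scaleN1r linZ scaleN1r. Qed.
Lemma linB x y : f (x - y) = f x - f y.
Proof. by rewrite linD linN. Qed.
End Lin.

Record submod_pred (R : comPzRingType) (V : lmodType R) := SubmodPred {
  sp :> V -> Prop;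
  sp0 : sp 0;
  spD : forall x y, sp x -> sp y -> sp (x + y);
  spZ : forall r x, sp x -> sp (r *: x) }.

Section SPfacts.
Variables (R : comPzRingType) (V : lmodType R) (U : submod_pred V).
Lemma spN x : U x -> U (- x).
Proof. by move=> Ux; rewrite -scaleN1r; apply: spZ. Qed.
Lemma spB x y : U x -> U y -> U (x - y).
Proof. by move=> Ux Uy; apply: spD => //; apply: spN. Qed.
End SPfacts.

Section SubMod.
Variables (R : comPzRingType) (V : lmodType R) (U : submod_pred V).

Definition subpred : {pred V} := fun x => `[< U x >].

Lemma subpred_closed : subsemimod_closed subpred.
Proof.
split; first split.
- by apply/asboolP; apply: sp0.
- by move=> x y /asboolP Ux /asboolP Uy; apply/asboolP; apply: spD.
- by move=> r x /asboolP Ux; apply/asboolP; apply: spZ.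
Qed.

HB.instance Definition _ := GRing.isSubmodClosed.Build R V subpred subpred_closed.

Record subm := Subm { subm_val :> V; subm_mem : subm_val \in subpred }.

HB.instance Definition _ := [isSub for subm_val].
HB.instance Definition _ := [Choice of subm by <:].
HB.instance Definition _ := [SubChoice_isSubLmodule of subm by <:].

Lemma subm_lin : is_lin (subm_val : subm -> V).
Proof. by move=> r x y. Qed.

Lemma submP (x : subm) : U (subm_val x).
Proof. exact/asboolP/subm_mem. Qed.

Definition mksubm (x : V) (Ux : U x) : subm := Subm (asboolT Ux).
End SubMod.

Section Quot.
Variables (R : comPzRingType) (V : lmodType R) (U : submod_pred V).

Definition coset (v : V) : V -> Prop := fun w => U (w - v).
Record quot := Quot { qval : V -> Prop; qprop : exists v, qval = coset v }.
HB.instance Definition _ := gen_eqMixin quot.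
HB.instance Definition _ := gen_choiceMixin quot.

Definition qpi (v : V) : quot := @Quot (coset v) (ex_intro _ v erefl).
Definition qrepr (q : quot) : V := projT1 (cid (qprop q)).

Lemma quot_ext (q1 q2 : quot) : qval q1 = qval q2 -> q1 = q2.
Proof.
case: q1 q2 => v1 p1 [v2 p2] /= e; subst v2.
by rewrite (Prop_irrelevance p1 p2).
Qed.

Lemma qpi_eq v w : qpi v = qpi w <-> U (v - w).
Proof.
split.
- move=> /(congr1 qval) /= e.
  have : coset v v by rewrite /coset subrr; apply: sp0.
  by rewrite e.
- move=> Uvw; apply: quot_ext => /=; apply: funext => x; apply: propext.
  rewrite /coset; split => H.
  + by have := spD H Uvw; rewrite addrA subrK.
  + have := spB H Uvw; rewrite opprB addrA subrK //.
Qed.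

Lemma qreprK q : qpi (qrepr q) = q.
Proof.
rewrite /qrepr; case: (cid _) => v /= e; apply: quot_ext => /=; by rewrite e.
Qed.

Lemma qrepr_pi v : U (qrepr (qpi v) - v).
Proof. by apply/qpi_eq; rewrite qreprK. Qed.

Definition qadd (q1 q2 : quot) := qpi (qrepr q1 + qrepr q2).
Definition qopp (q : quot) := qpi (- qrepr q).
Definition qzero := qpi 0.
Definition qscale (r : R) (q : quot) := qpi (r *: qrepr q).

Lemma qaddE v w : qadd (qpi v) (qpi w) = qpi (v + w).
Proof.
apply/qpi_eq; have := spD (qrepr_pi v) (qrepr_pi w).
by rewrite opprD addrACA.
Qed.
Lemma qoppE v : qopp (qpi v) = qpi (- v).
Proof. apply/qpi_eq; have := spN (qrepr_pi v); by rewrite opprB opprK addrC. Qed.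
Lemma qscaleE r v : qscale r (qpi v) = qpi (r *: v).
Proof. apply/qpi_eq; have := spZ r (qrepr_pi v); by rewrite scalerBr. Qed.

Lemma qind (P : quot -> Prop) : (forall v, P (qpi v)) -> forall q, P q.
Proof. by move=> H q; rewrite -(qreprK q). Qed.

Lemma qaddA : associative qadd.
Proof. by elim/qind=> x; elim/qind=> y; elim/qind=> z; rewrite !qaddE addrA. Qed.
Lemma qaddC : commutative qadd.
Proof. by elim/qind=> x; elim/qind=> y; rewrite !qaddE addrC. Qed.
Lemma qadd0 : left_id qzero qadd.
Proof. by elim/qind=> x; rewrite /qzero qaddE add0r. Qed.
Lemma qaddN : left_inverse qzero qopp qadd.
Proof. by elim/qind=> x; rewrite qoppE qaddE addNr. Qed.

HB.instance Definition _ := GRing.isZmodule.Build quot qaddA qaddC qadd0 qaddN.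

Lemma qscaleA a b v : qscale a (qscale b v) = qscale (a * b) v.
Proof. by elim/qind: v => x; rewrite !qscaleE scalerA. Qed.
Lemma qscale1 : left_id 1 qscale.
Proof. by elim/qind=> x; rewrite qscaleE scale1r. Qed.
Lemma qscaleDr : right_distributive qscale qadd.
Proof. by move=> r; elim/qind=> x; elim/qind=> y; rewrite !(qaddE, qscaleE) scalerDr. Qed.
Lemma qscaleDl v : {morph qscale^~ v : a b / a + b >-> qadd a b}.
Proof. by move=> a b; elim/qind: v => x; rewrite !(qaddE, qscaleE) scalerDl. Qed.

HB.instance Definition _ := GRing.Zmodule_isLmodule.Build R quot qscaleA qscale1 qscaleDr qscaleDl.

Lemma qpi_lin : is_lin qpi.
Proof.
move=> r x y.
have -> : r *: qpi x = qpi (r *: x) := qscaleE r x.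
by have -> : qpi (r *: x) + qpi y = qpi (r *: x + y) := qaddE _ _.
Qed.

Lemma qpi0 v : qpi v = 0 <-> U v.
Proof. have -> : (0 : quot) = qpi 0 by []. by rewrite qpi_eq subr0. Qed.

Lemma qpi_surj (q : quot) : exists v, qpi v = q.
Proof. by exists (qrepr q); rewrite qreprK. Qed.
End Quot.

Lemma sub_quot_exact (R : comPzRingType) (V : lmodType R) (U : submod_pred V) :
  short_exact (@subm_val R V U) (@qpi R V U).
Proof.
split.
- exact: subm_lin.
- exact: qpi_lin.
- exact: val_inj.
- exact: qpi_surj.
- move=> y; rewrite qpi0; split.
  + by move=> Uy; exists (mksubm Uy).
  + by case=> x ->; apply: submP.
Qed.

Section HomGen.
Variable R : comPzRingType.

Lemma hom_exact_gen (N M L F : lmodType R) (f : N -> M) (g : M -> L) :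
  short_exact f g ->
  (forall h : N -> F, is_lin h ->
          exists psi : M -> F, is_lin psi /\ forall x, psi (f x) = h x) ->
  hom_exact F f g.
Proof.
move=> [lf lg injf surjg exg] H4; split => //.
- by move=> phi lphi H z; have [y <-] := surjg z; apply: H.
- move=> phi lphi x; have -> : g (f x) = 0 by apply/exg; exists x.
  exact: lin0.
- move=> psi lpsi hpsi.
  have key : forall y y', g y = g y' -> psi y = psi y'.
    move=> y y' e; have : g (y - y') = 0 by rewrite (linB lg) e subrr.
    move=> /exg [x ex]; apply/eqP; rewrite -subr_eq0 -(linB lpsi) ex hpsi //.
  pose gs z := projT1 (cid (surjg z)).
  have gsP z : g (gs z) = z by rewrite /gs; case: (cid _).
  exists (fun z => psi (gs z)); split.
  + move=> r z z'; rewrite -(linZ lpsi) -(linD lpsi); apply: key.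
    by rewrite (linD lg) (linZ lg) !gsP.
  + by move=> y; apply: key; rewrite gsP.
Qed.

Lemma extend (E : lmodType R) (hE : injective_module E) (V : lmodType R)
  (U : submod_pred V) (phi : V -> E) :
  (forall r x y, U x -> U y -> phi (r *: x + y) = r *: phi x + phi y) ->
  exists psi, is_lin psi /\ forall x, U x -> psi x = phi x.
Proof.
move=> hphi.
have [_ _ _ H4] := hE _ _ _ _ _ (sub_quot_exact U).
have [|psi [lpsi Hpsi]] := H4 (fun s => phi (subm_val s)).
  by move=> r x y /=; apply: hphi; apply: submP.
exists psi; split => // x Ux.
exact: (Hpsi (mksubm Ux)).
Qed.
End HomGen.

Section Pure.
Variables (R : comPzRingType) (a b : R).

Definition inI (z : R) := exists al be, z = al * a + be * b.

Lemma inI0 : inI 0. Proof. by exists 0, 0; rewrite !mul0r addr0. Qed.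
Lemma inID x y : inI x -> inI y -> inI (x + y).
Proof. by move=> [a1 [b1 ->]] [a2 [b2 ->]]; exists (a1 + a2), (b1 + b2); rewrite !mulrDl addrACA. Qed.
Lemma inIM r x : inI x -> inI (r * x).
Proof. by move=> [a1 [b1 ->]]; exists (r * a1), (r * b1); rewrite mulrDr !mulrA. Qed.

Definition Ipred : submod_pred R^o := @SubmodPred R R^o inI inI0 inID inIM.

Definition FI := quot Ipred.
Definition pi1 : FI := qpi Ipred (1 : R^o).

Section Mod.
Variable N : lmodType R.
Definition inIN (x : N) := exists n1 n2, x = a *: n1 + b *: n2.
Lemma inIN0 : inIN 0. Proof. by exists 0, 0; rewrite !scaler0 addr0. Qed.
Lemma inIND x y : inIN x -> inIN y -> inIN (x + y).
Proof. by move=> [a1 [b1 ->]] [a2 [b2 ->]]; exists (a1 + a2), (b1 + b2); rewrite !scalerDr addrACA. Qed.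
Lemma inINZ r x : inIN x -> inIN (r *: x).
Proof.
move=> [a1 [b1 ->]]; exists (r *: a1), (r *: b1).
by rewrite scalerDr !scalerA mulrC [r * b]mulrC.
Qed.
Lemma inINN x : inIN x -> inIN (- x).
Proof. by move=> H; rewrite -scaleN1r; apply: inINZ. Qed.
Lemma inIN_I z (x : N) : inI z -> inIN (z *: x).
Proof. by move=> [al [be ->]]; exists (al *: x), (be *: x); rewrite scalerDl !scalerA mulrC [be * b]mulrC. Qed.

Definition theta (k : N * FI) : N := qrepr k.2 *: k.1.
Definition Th (s : seq (R * (N * FI))) : N := \sum_(p <- s) p.1 *: theta p.2.

Lemma fcoef_cons (p : R * (N * FI)) s k : fcoef (p :: s) k = (if p.2 == k then p.1 else 0) + fcoef s k.
Proof. by rewrite /fcoef big_cons; case: ifP => _; rewrite ?add0r. Qed.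

Lemma sum_ind (A : seq (N * FI)) (k0 : N * FI) (c : R) :
  uniq A -> k0 \in A ->
  \sum_(k <- A) (if k0 == k then c else 0) *: theta k = c *: theta k0.
Proof.
move=> uA kA; rewrite (big_rem k0 kA) /= eqxx big1_seq ?addr0 //.
move=> k /andP[_ kr]; case: eqP => [ek|]; last by rewrite scale0r.
by move: kr; rewrite -ek (mem_rem_uniqF k0 uA).
Qed.

Lemma Th_keys s A : uniq A -> {subset map snd s <= A} ->
  Th s = \sum_(k <- A) fcoef s k *: theta k.
Proof.
move=> uA; elim: s => [|p s IH] sub.
  by rewrite /Th big_nil big1_seq // => k _; rewrite /fcoef big_nil scale0r.
rewrite /Th big_cons -/(Th s) IH; last by move=> k ks; apply: sub; rewrite /= inE ks orbT.

have -> : \sum_(k <- A) fcoef (p :: s) k *: theta k =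
  \sum_(k <- A) ((if p.2 == k then p.1 else 0) *: theta k + fcoef s k *: theta k).
  by apply: eq_bigr => k _; rewrite -scalerDl; congr (_ *: _); exact: fcoef_cons.
rewrite big_split /= sum_ind //; apply: sub; by rewrite /= inE eqxx.
Qed.

Lemma Th_eq s t : (forall k, fcoef s k = fcoef t k) -> Th s = Th t.
Proof.
move=> H.
have uA := undup_uniq (map snd (s ++ t)).
rewrite (Th_keys (s:=s) uA); last first.
  by move=> k ks; rewrite mem_undup map_cat mem_cat ks.
rewrite (Th_keys (s:=t) uA); last first.
  by move=> k ks; rewrite mem_undup map_cat mem_cat ks orbT.
by apply: eq_bigr => k _; rewrite H.
Qed.

Lemma Th_cat s t : Th (s ++ t) = Th s + Th t.
Proof. by rewrite /Th big_cat. Qed.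

Lemma Th_fscale c s : Th (fscale c s) = c *: Th s.
Proof.
rewrite /Th /fscale big_map scaler_sumr; apply: eq_bigr => p _.
by rewrite scalerA.
Qed.

Lemma Th_rel (g : tens_rel N FI) : inIN (Th (rel_expand g)).
Proof.
case: g => [n n' f|n f f'|r n f|r n f]; rewrite /Th /= !big_cons big_nil /theta /=.
- by rewrite addr0 scale1r !scaleN1r scalerDr addrACA !subrr addr0; exact: inIN0.
- rewrite addr0 scale1r !scaleN1r addrA -scalerBl -scalerBl; apply: inIN_I.
  have Hf := qreprK f; have Hf' := qreprK f'.
  have : qpi Ipred (qrepr (f + f')) = qpi Ipred (qrepr f + qrepr f').
    by rewrite qreprK -qaddE !qreprK.
  by move/qpi_eq; rewrite opprD addrA.
- by rewrite addr0 scale1r !scalerA mulNr scaleNr [qrepr f * r]mulrC subrr; exact: inIN0.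
- rewrite addr0 scale1r scaleNr scalerA -scalerBl; apply: inIN_I.
  have : qpi Ipred (qrepr (r *: f)) = qpi Ipred (r * qrepr f).
    by rewrite qreprK -[r * _]/(r *: (qrepr f : R^o)) -qscaleE qreprK.
  by move/qpi_eq.
Qed.

Lemma Th_zero s : tensor_zero s -> inIN (Th s).
Proof.
move=> [Ls HL]; rewrite (Th_eq HL); elim: Ls {HL} => [|c Ls IH] /=.
  by rewrite /Th big_nil; apply: inIN0.
rewrite Th_cat Th_fscale; apply: inIND => //; apply: inINZ; apply: Th_rel.
Qed.

Lemma tensor_zero_pi1 (n : N) : tensor_zero [:: (1, (n, pi1))] -> inIN n.
Proof.
move=> /Th_zero; rewrite /Th big_cons big_nil addr0 scale1r /theta /=.
have H : inI (qrepr pi1 - 1) := @qrepr_pi _ _ Ipred (1 : R^o).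
move=> H1; have H2 := inINN (inIN_I n H).
have := inIND H1 H2; by rewrite -scaleNr -scalerDl opprB addrC subrK scale1r.
Qed.
End Mod.
End Pure.

Section Pure2.
Variables (R : comPzRingType) (a b : R).

Lemma fcoef_cons2 (N F : lmodType R) (p : R * (N * F)) s k :
  fcoef (p :: s) k = (p.2 == k)%:R * p.1 + fcoef s k.
Proof. by rewrite /fcoef big_cons; case: ifP => _ /=; rewrite ?mulr1n ?mul1r ?mulr0n ?mul0r ?add0r. Qed.

Lemma fcoef_nil (N F : lmodType R) k : fcoef (N:=N) (F:=F) [::] k = 0.
Proof. by rewrite /fcoef big_nil. Qed.

Lemma scale_pi1 (c : R) : inI a b c -> c *: pi1 a b = 0.
Proof.
move=> H; rewrite /pi1 -[c *: _]/(qscale c _) qscaleE; apply/qpi0.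
have H1 : inI a b (c * 1) by rewrite mulr1. exact: H1.
Qed.

Lemma tz_comb (M : lmodType R) (m1 m2 : M) :
  tensor_zero [:: (1, (a *: m1 + b *: m2, pi1 a b))].
Proof.
pose p1 := pi1 a b.
exists [:: (1, RelAddL (a *: m1) (b *: m2) p1); (1, RelScL a m1 p1); (1, RelScL b m2 p1);
  (-1, RelScR a m1 p1); (-1, RelScR b m2 p1); (1, RelScR 0 m1 p1); (1, RelScR 0 m2 p1)].
move=> k /=.
have ha : a *: p1 = 0 by apply: scale_pi1; exists 1, 0; rewrite mul1r mul0r addr0.
have hb : b *: p1 = 0 by apply: scale_pi1; exists 0, 1; rewrite mul1r mul0r add0r.
rewrite ha hb scale0r !fcoef_cons2 !fcoef_nil /=.
ring.
Qed.
End Pure2.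

Section PureInj.
Variables (R : comPzRingType) (a b : R).

Lemma ann2P (E : lmodType R) (s : ann2 E a b) : a *: (s : E) = 0 /\ b *: (s : E) = 0.
Proof. by have := ann2_mem s; rewrite inE => /andP[/eqP -> /eqP ->]. Qed.

Definition mkann2 (E : lmodType R) (x : E) (ha : a *: x = 0) (hb : b *: x = 0) : ann2 E a b.
Proof.
refine (@Ann2 R E a b x _); by rewrite inE ha hb eqxx.
Defined.

Lemma sum3 (M : lmodType R) (x y z x' y' z' : M) :
  (x + y + z) + (x' + y' + z') = (x + x') + (y + y') + (z + z').
Proof. by rewrite addrACA [x + y + _]addrACA. Qed.

Lemma pure_IN (N M L : lmodType R) (f : N -> M) (g : M -> L) :
  pure_exact f g -> forall n, (exists m1 m2, f n = a *: m1 + b *: m2) -> inIN a b n.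
Proof.
move=> [_ HT] n [m1 [m2 e]]; have [H1 _ _ _] := HT (FI a b).
apply: tensor_zero_pi1; apply: H1; rewrite /tmap /= e; exact: tz_comb.
Qed.

Lemma pure_inj (E : lmodType R) (hE : injective_module E) : pure_injective (ann2 E a b).
Proof.
move=> N M L f g hp; have hse := hp.1; have [lf _ _ _ _] := hse.
apply: hom_exact_gen => // h lh.
pose hv n := ann2_val (h n).
have lhv : is_lin hv by move=> r x y; rewrite /hv lh.
have hN : forall n, inIN a b n -> hv n = 0.
  move=> n [n1 [n2 ->]]; rewrite (linD lhv) !(linZ lhv).
  by rewrite (ann2P (h n1)).1 (ann2P (h n2)).2 addr0.
pose Up m := exists n m1 m2, m = f n + a *: m1 + b *: m2.
have U0 : Up 0 by exists 0, 0, 0; rewrite (lin0 lf) !scaler0 !addr0.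
have UD : forall x y, Up x -> Up y -> Up (x + y).
  move=> x y [n [m1 [m2 ->]]] [n' [m1' [m2' ->]]].
  by exists (n + n'), (m1 + m1'), (m2 + m2'); rewrite sum3 (linD lf) !scalerDr.
have UZ : forall r x, Up x -> Up (r *: x).
  move=> r x [n [m1 [m2 ->]]]; exists (r *: n), (r *: m1), (r *: m2).
  by rewrite (linZ lf) !scalerDr !scalerA [r * a]mulrC [r * b]mulrC.
pose U := SubmodPred U0 UD UZ.
pose phi m := if pselect (Up m) is left H then hv (projT1 (cid H)) else 0.
have phiE : forall n m1 m2, phi (f n + a *: m1 + b *: m2) = hv n.
  move=> n m1 m2; rewrite /phi; case: pselect => [H|[]]; last by exists n, m1, m2.
  case: (cid H) => n' /= [m1' [m2' e]].
  apply/eqP; rewrite -subr_eq0 -(linB lhv); apply/eqP; apply: hN.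
  apply: (pure_IN hp); exists (m1 - m1'), (m2 - m2').
  rewrite (linB lf) !scalerBr.
  rewrite -!addrA in e.
  have -> : f n = f n' + (a *: m1' + b *: m2') - (a *: m1 + b *: m2).
    by rewrite -e addrK.
  by rewrite -[f n' + _ - _]addrA opprD addrA subrr add0r opprB opprD addrACA.
have [psi0 [lpsi0 Hpsi0]] : exists psi, is_lin psi /\ forall x, U x -> psi x = phi x.
  apply: extend => // r x y [n [m1 [m2 ->]]] [n' [m1' [m2' ->]]].
  rewrite !scalerDr sum3 -(linZ lf) -(linD lf) !scalerA [r * a]mulrC [r * b]mulrC.
  by rewrite -!scalerA -!scalerDr !phiE lhv.
have inS : forall m, a *: psi0 m = 0 /\ b *: psi0 m = 0.
  move=> m; rewrite -!(linZ lpsi0) !Hpsi0.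
  - have -> : a *: m = f 0 + a *: m + b *: 0 by rewrite (lin0 lf) scaler0 add0r addr0.
    have -> : b *: m = f 0 + a *: 0 + b *: m by rewrite (lin0 lf) scaler0 !add0r.
    by rewrite !phiE (lin0 lhv).
  - by exists 0, 0, m; rewrite (lin0 lf) scaler0 !add0r.
  - by exists 0, m, 0; rewrite (lin0 lf) scaler0 add0r addr0.
exists (fun m => mkann2 (inS m).1 (inS m).2); split.
- by move=> r x y; apply: val_inj; rewrite /= lpsi0.
- move=> x; apply: val_inj; rewrite /= Hpsi0.
  + have -> : f x = f x + a *: 0 + b *: 0 by rewrite !scaler0 !addr0.
    by rewrite phiE.
  + by exists x, 0, 0; rewrite !scaler0 !addr0.
Qed.
End PureInj.

Section Ideal.
Variables (R : comPzRingType) (P : R -> Prop) (hP : is_maximal_ideal P).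
Let hI : is_ideal P. Proof. by case: hP. Qed.
Lemma P0 : P 0. Proof. by case: hI. Qed.
Lemma PD x y : P x -> P y -> P (x + y). Proof. by case: hI => _ H _; apply: H. Qed.
Lemma PM r x : P x -> P (r * x). Proof. by case: hI => _ _ H; apply: H. Qed.
Lemma PMr r x : P x -> P (x * r). Proof. by rewrite mulrC; apply: PM. Qed.
Lemma PN x : P x -> P (- x). Proof. by move=> H; rewrite -mulN1r; apply: PM. Qed.
Lemma PB x y : P x -> P y -> P (x - y). Proof. by move=> Hx Hy; apply: PD => //; apply: PN. Qed.
Lemma PN1 : ~ P 1. Proof. by case: hP. Qed.
Lemma Pprime x y : ~ P x -> ~ P y -> ~ P (x * y).
Proof.
move=> nx ny pxy.
pose J z := exists r p, P p /\ z = r * x + p.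
have hJ : is_ideal J.
  split.
  - by exists 0, 0; split; [apply: P0 | rewrite mul0r addr0].
  - move=> u v [r1 [p1 [H1 ->]]] [r2 [p2 [H2 ->]]].
    exists (r1 + r2), (p1 + p2); split; first exact: PD.
    by rewrite mulrDl addrACA.
  - move=> r u [r1 [p1 [H1 ->]]]; exists (r * r1), (r * p1); split; first exact: PM.
    by rewrite mulrDr mulrA.
case: hP => _ _ /(_ J hJ) [].
- by move=> p Pp; exists 0, p; rewrite mul0r add0r.
- by move=> H; apply: nx; apply: H; exists 1, 0; split; [apply: P0| rewrite mul1r addr0].
- move=> [r [p [Pp e]]]; apply: ny.
  have -> : y = r * (x * y) + p * y by rewrite mulrA -mulrDl -e mul1r.
  by apply: PD; [apply: PM | apply: PMr].
Qed.
Lemma Pdiff w z : ~ P w -> P (w + z) -> ~ P z.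
Proof. by move=> nw H Pz; apply: nw; have := PB H Pz; rewrite addrK. Qed.
End Ideal.

Section RD.
Variables (R : comPzRingType) (P : R -> Prop) (hP : is_maximal_ideal P) (a b : R).
Hypothesis hD1 : forall u c, ~ P u -> u * a = c * b -> False.
Hypothesis hD2 : forall u c, ~ P u -> u * b = c * a -> False.
Variables (E : lmodType R) (e : E).
Hypothesis hE : injective_module E.
Hypothesis hann : forall r : R, r *: e = 0 <-> P r.

Lemma key_P r y al be m1 m2 m3 : r * y = al * a + be * b ->
  m1 * a + m2 * r = 0 -> m1 * b + m3 * r = 0 -> P (m1 * y).
Proof.
move=> ery e1 e2; apply: contrapT => nw.
have eq1 : (m1 * y + m2 * al) * a = - (m2 * be) * b.
  apply/eqP; rewrite -subr_eq0; apply/eqP.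
  have -> : (m1 * y + m2 * al) * a - - (m2 * be) * b =
    y * (m1 * a + m2 * r) - m2 * (r * y - (al * a + be * b)) by ring.
  by rewrite e1 ery subrr !mulr0 subr0.
have eq2 : (m1 * y + m3 * be) * b = - (m3 * al) * a.
  apply/eqP; rewrite -subr_eq0; apply/eqP.
  have -> : (m1 * y + m3 * be) * b - - (m3 * al) * a =
    y * (m1 * b + m3 * r) - m3 * (r * y - (al * a + be * b)) by ring.
  by rewrite e2 ery subrr !mulr0 subr0.
have h1 : P (m1 * y + m2 * al) by apply: contrapT => H; exact: hD1 H eq1.
have h2 : P (m1 * y + m3 * be) by apply: contrapT => H; exact: hD2 H eq2.
have n2 := Pdiff hP nw h1; have n3 := Pdiff hP nw h2.
have nal : ~ P al by move=> H; apply: n2; apply: PM.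
have nm3 : ~ P m3 by move=> H; apply: n3; apply: PMr.
have n := Pprime hP nm3 nal.
apply: (hD1 (u := - (m3 * al)) (c := m1 * y + m3 * be)).
  by move=> H; apply: n; have := PN hP H; rewrite opprK.
by rewrite eq2.
Qed.

Lemma solve r y al be : r * y = al * a + be * b -> ~ P y ->
  exists u v : E, [/\ r *: u = 0, r *: v = 0 & a *: u + b *: v = y *: e].
Proof.
move=> ery ny.
pose V := (R^o * R^o)%type.
have addV : forall x1 x2 y1 y2 : R, ((x1, x2) : V) + (y1, y2) = (x1 + y1, x2 + y2) by [].
have scaleV : forall (c x1 x2 : R), c *: ((x1, x2) : V) = (c * x1, c * x2) by [].
pose Up (z : V) := exists l1 l2 l3, z = (l1 * a + l2 * r, l1 * b + l3 * r).
have U0 : Up 0 by exists 0, 0, 0; rewrite !mul0r !addr0.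
have UD : forall x z, Up x -> Up z -> Up (x + z).
  move=> x z [l1 [l2 [l3 ->]]] [k1 [k2 [k3 ->]]].
  exists (l1 + k1), (l2 + k2), (l3 + k3).
  rewrite addV; congr pair; ring.
have UZ : forall c x, Up x -> Up (c *: x).
  move=> c x [l1 [l2 [l3 ->]]]; exists (c * l1), (c * l2), (c * l3).
  rewrite scaleV; congr pair; ring.
pose U := SubmodPred U0 UD UZ.
pose phi (z : V) := if pselect (Up z) is left H then projT1 (cid H) *: (y *: e) else 0.
have phiE : forall z l1 l2 l3, z = (l1 * a + l2 * r, l1 * b + l3 * r) -> phi z = l1 *: (y *: e).
  move=> z l1 l2 l3 ez; rewrite /phi; case: pselect => [H|[]]; last by exists l1, l2, l3.
  case: (cid H) => k1 /= [k2 [k3 ez']].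
  rewrite ez in ez'; case: ez' => ea eb.
  apply/eqP; rewrite -subr_eq0 -scalerBl scalerA; apply/eqP; apply/hann.
  apply: (@key_P r y al be (k1 - l1) (k2 - l2) (k3 - l3)) => //.
  + apply/eqP; rewrite -subr_eq0; apply/eqP.
    have -> : (k1 - l1) * a + (k2 - l2) * r - 0 = (k1 * a + k2 * r) - (l1 * a + l2 * r) by ring.
    by rewrite ea subrr.
  + apply/eqP; rewrite -subr_eq0; apply/eqP.
    have -> : (k1 - l1) * b + (k3 - l3) * r - 0 = (k1 * b + k3 * r) - (l1 * b + l3 * r) by ring.
    by rewrite eb subrr.
have [psi [lpsi Hpsi]] : exists psi, is_lin psi /\ forall x, U x -> psi x = phi x.
  apply: extend => // c x z [l1 [l2 [l3 ->]]] [k1 [k2 [k3 ->]]].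
  rewrite (phiE (l1 * a + l2 * r, l1 * b + l3 * r) l1 l2 l3 erefl).
  rewrite (phiE (k1 * a + k2 * r, k1 * b + k3 * r) k1 k2 k3 erefl).
  rewrite (phiE _ (c * l1 + k1) (c * l2 + k2) (c * l3 + k3)).
    by rewrite [c *: (l1 *: _)]scalerA -scalerDl.
  rewrite scaleV addV; congr pair; ring.
exists (psi ((1, 0) : V)), (psi ((0, 1) : V)); split.
- rewrite -(linZ lpsi) Hpsi.
    rewrite (phiE _ 0 1 0) ?scale0r //.
    rewrite scaleV; congr pair; ring.
  exists 0, 1, 0; rewrite scaleV; congr pair; ring.
- rewrite -(linZ lpsi) Hpsi.
    rewrite (phiE _ 0 0 1) ?scale0r //.
    rewrite scaleV; congr pair; ring.
  exists 0, 0, 1; rewrite scaleV; congr pair; ring.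
- rewrite -!(linZ lpsi) -(linD lpsi) Hpsi.
    rewrite (phiE _ 1 0 0) ?scale1r //.
    rewrite !scaleV addV; congr pair; ring.
  exists 1, 0, 0; rewrite !scaleV addV; congr pair; ring.
Qed.
End RD.

Section RD2.
Variables (R : comPzRingType) (P : R -> Prop) (hP : is_maximal_ideal P) (a b : R).
Hypothesis hD1 : forall u c, ~ P u -> u * a = c * b -> False.
Hypothesis hD2 : forall u c, ~ P u -> u * b = c * a -> False.
Hypotheses (Pa : P a) (Pb : P b).
Variables (E : lmodType R) (e : E).
Hypothesis hE : injective_module E.
Hypothesis hann : forall r : R, r *: e = 0 <-> P r.

Lemma divide r (x : E) : (forall t, inI a b (r * t) -> t *: x = 0) ->
  exists s : E, [/\ r *: s = x, a *: s = 0 & b *: s = 0].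
Proof.
move=> hx.
pose Up (z : R^o) := exists t al be, z = r * t + al * a + be * b.
have U0 : Up 0 by exists 0, 0, 0; rewrite !mulr0 !mul0r !addr0.
have UD : forall x z, Up x -> Up z -> Up (x + z).
  move=> x1 z [t [al [be ->]]] [t' [al' [be' ->]]].
  by exists (t + t'), (al + al'), (be + be'); rewrite /=; ring.
have UZ : forall c x, Up x -> Up (c *: x).
  move=> c x1 [t [al [be ->]]]; exists (c * t), (c * al), (c * be).
  by rewrite /GRing.scale /=; ring.
pose U := SubmodPred U0 UD UZ.
pose phi (z : R^o) := if pselect (Up z) is left H then projT1 (cid H) *: x else 0.
have phiE : forall z t al be, z = r * t + al * a + be * b -> phi z = t *: x.
  move=> z t al be ez; rewrite /phi; case: pselect => [H|[]]; last by exists t, al, be.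
  case: (cid H) => t' /= [al' [be' ez']].
  apply/eqP; rewrite -subr_eq0 -scalerBl; apply/eqP; apply: hx.
  exists (al - al'), (be - be'); rewrite ez in ez'.
  apply/eqP; rewrite -subr_eq0; apply/eqP.
  have -> : r * (t' - t) - ((al - al') * a + (be - be') * b) =
    (r * t' + al' * a + be' * b) - (r * t + al * a + be * b) by ring.
  by rewrite ez' subrr.
have [psi [lpsi Hpsi]] : exists psi, is_lin psi /\ forall x, U x -> psi x = phi x.
  apply: extend => // c x1 z [t [al [be ->]]] [t' [al' [be' ->]]].
  rewrite (phiE (r * t + al * a + be * b) t al be erefl).
  rewrite (phiE (r * t' + al' * a + be' * b) t' al' be' erefl).
  rewrite (phiE _ (c * t + t') (c * al + al') (c * be + be')).
    by rewrite scalerDl scalerA.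
  by rewrite /GRing.scale /=; ring.
exists (psi (1 : R^o)); split.
- rewrite -(linZ lpsi) Hpsi; last by exists 1, 0, 0; rewrite /GRing.scale /=; ring.
  by rewrite (phiE _ 1 0 0) ?scale1r // /GRing.scale /=; ring.
- rewrite -(linZ lpsi) Hpsi; last by exists 0, 1, 0; rewrite /GRing.scale /=; ring.
  by rewrite (phiE _ 0 1 0) ?scale0r // /GRing.scale /=; ring.
- rewrite -(linZ lpsi) Hpsi; last by exists 0, 0, 1; rewrite /GRing.scale /=; ring.
  by rewrite (phiE _ 0 0 1) ?scale0r // /GRing.scale /=; ring.
Qed.

Definition iotaf (x : E) : R * R -> E :=
  fun j => if `[< inI a b (j.1 * j.2) >] then j.2 *: x else 0.

Lemma YU0 : (fun f : R * R -> E => forall j, j.1 *: f j = 0) 0.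
Proof. by move=> j; rewrite scaler0. Qed.
Lemma YUD (f g : R * R -> E) : (forall j, j.1 *: f j = 0) -> (forall j, j.1 *: g j = 0) ->
  forall j, j.1 *: (f + g) j = 0.
Proof. by move=> hf hg j; rewrite /= scalerDr hf hg addr0. Qed.
Lemma YUZ c (f : R * R -> E) : (forall j, j.1 *: f j = 0) -> forall j, j.1 *: (c *: f) j = 0.
Proof. by move=> hf j; rewrite /= scalerA mulrC -scalerA hf scaler0. Qed.

Definition YU := @SubmodPred R (R * R -> E) (fun f => forall j, j.1 *: f j = 0) YU0 YUD YUZ.
Definition Y := subm YU.

Lemma iota_mem (x : ann2 E a b) : YU (iotaf x).
Proof.
move=> j; rewrite /iotaf; case: asboolP => [[al [be e1]]|_]; last by rewrite scaler0.
rewrite scalerA e1 scalerDl -!scalerA (ann2P x).1 (ann2P x).2 !scaler0 addr0 //.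
Qed.

Definition iotaS (x : ann2 E a b) : Y := mksubm (iota_mem x).

Lemma iota_lin : is_lin iotaS.
Proof.
move=> r x y; apply: val_inj; apply: funext => j.
transitivity (r *: iotaf x j + iotaf y j); last by [].
rewrite /= /iotaf; case: asboolP => _; last by rewrite scaler0 addr0.
by rewrite scalerDr !scalerA mulrC.
Qed.

Lemma not_RD : ~ RD_injective (ann2 E a b).
Proof.
move=> hRD.
have li := iota_lin.
pose Ur (z : Y) := exists x, z = iotaS x.
have U0 : Ur 0 by exists 0; rewrite (lin0 li).
have UD : forall x z, Ur x -> Ur z -> Ur (x + z).
  by move=> x z [x1 ->] [z1 ->]; exists (x1 + z1); rewrite (linD li).
have UZ : forall c x, Ur x -> Ur (c *: x).
  by move=> c x [x1 ->]; exists (c *: x1); rewrite (linZ li).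
pose Uq := SubmodPred U0 UD UZ.
have hRDex : RD_exact iotaS (@qpi R Y Uq).
  split.
    split.
    - exact: li.
    - exact: qpi_lin.
    - move=> x y /(congr1 (fun z : Y => subm_val z (0, 1))) /=.
      rewrite /iotaf asboolT; last by exists 0, 0; rewrite !mul0r addr0.
      by rewrite !scale1r => /val_inj.
    - exact: qpi_surj.
    - by move=> y; rewrite qpi0.
  move=> r m; split.
  - move=> [[z ez] [x ex]].
    have hx : forall t, inI a b (r * t) -> t *: (x : E) = 0.
      move=> t ht; have := congr1 (fun w : Y => subm_val w (r, t)) (etrans (esym ex) ez).
      rewrite /= /iotaf asboolT // => ->.
      exact: (submP z (r, t)).
    have [s [hs1 hs2 hs3]] := divide hx.
    exists (mkann2 hs2 hs3); rewrite ex; congr iotaS; apply: val_inj; by rewrite /= hs1.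
  - move=> [x ->]; split; first by exists (iotaS x); rewrite (linZ li).
    by exists (r *: x).
have [_ _ _ H4] := hRD _ _ _ _ _ hRDex.
have [psi [lpsi Hpsi]] := H4 id (fun r x y => erefl).
have hZ : forall j : R * R, exists uv : E * E,
    [/\ j.1 *: uv.1 = 0, j.1 *: uv.2 = 0 & a *: uv.1 + b *: uv.2 = iotaf e j].
  move=> [r y]; rewrite /iotaf /=; case: asboolP => [[al [be ery]]|_]; last first.
    by exists (0, 0); rewrite /= !scaler0 addr0.
  case: (pselect (P y)) => [Py|ny].
    by exists (0, 0); rewrite /= !scaler0 addr0; split => //; symmetry; apply/hann.
  have [u [v [h1 h2 h3]]] := solve hP hD1 hD2 hE hann ery ny.
  by exists (u, v).
have [F HF] := choice hZ.
have m1 : YU (fun j => (F j).1) by move=> j; case: (HF j).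
have m2 : YU (fun j => (F j).2) by move=> j; case: (HF j).
have ha : a *: e = 0 by apply/hann.
have hb : b *: e = 0 by apply/hann.
pose eS := mkann2 ha hb.
have eq : iotaS eS = a *: mksubm m1 + b *: mksubm m2.
  by apply: val_inj; apply: funext => j /=; case: (HF j).
have := Hpsi eS; rewrite eq (linD lpsi) !(linZ lpsi) => /(congr1 (@ann2_val _ _ _ _)) /=.
rewrite (ann2P (psi (mksubm m1))).1 (ann2P (psi (mksubm m2))).2 addr0 => e0.
apply: (PN1 hP); apply/hann; by rewrite -e0 scale1r.
Qed.
End RD2.

Unset Implicit Arguments.

Theorem proposition4p2 (R : comPzRingType) :
  ~ arithmetic R ->
  exists (P : R -> Prop) (a b : R),
    [/\ is_maximal_ideal P, P a, P b &
      forall (E : lmodType R) (e : E), injective_hull_of_quotient P e ->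
        pure_injective (ann2 E a b) /\ ~ RD_injective (ann2 E a b)].
Proof.
move=> hna.
have [P [hP nv]] : exists P : R -> Prop, is_maximal_ideal P /\ ~ localization_is_valuation P.
  apply: contrapT => H; apply: hna; move=> P hP; apply: contrapT => nv.
  by apply: H; exists P.
have [x [s [y [t [ns nt [n1 n2]]]]]] : exists x s y t, [/\ ~ P s, ~ P t &
    ~ loc_dvd P x s y t /\ ~ loc_dvd P y t x s].
  apply: contrapT => H; apply: nv => x s y t ns nt.
  apply: contrapT => H2; apply: H; exists x, s, y, t; split => //.
  by split => H3; apply: H2; [left | right].
have hD1 : forall u c, ~ P u -> u * x = c * y -> False.
  move=> u c nu e; apply: n2; exists (c * t), (u * s); split; first exact: Pprime.
  exists 1; split; first exact: (PN1 hP).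
  have -> : 1 * (y * (c * t) * s - x * (t * (u * s))) = t * s * (c * y - u * x) by ring.
  by rewrite e subrr mulr0.
have hD2 : forall u c, ~ P u -> u * y = c * x -> False.
  move=> u c nu e; apply: n1; exists (c * s), (u * t); split; first exact: Pprime.
  exists 1; split; first exact: (PN1 hP).
  have -> : 1 * (x * (c * s) * t - y * (s * (u * t))) = s * t * (c * x - u * y) by ring.
  by rewrite e subrr mulr0.
have Pa : P x by apply: contrapT => H; apply: (hD2 x y H); rewrite mulrC.
have Pb : P y by apply: contrapT => H; apply: (hD1 y x H); rewrite mulrC.
exists P, x, y; split => // E e [hE hann _]; split.
- exact: pure_inj hE.
- exact: (not_RD hP hD1 hD2 Pa Pb hE hann).
Qed.
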